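(* Let $n\ge2$, let $P$ be a partial $n$-Metric on a set $X$, let $\{x_i\}_{i\in\mathbb{N}}$ be a sequence in $X$ and let $r\in\mathbb{R}$. The following are equivalent: (a) $\{x_i\}$ is a Cauchy sequence with central distance $r$; (b) for every $\epsilon>0$ there is $N\in\mathbb{N}$ such that for all $i,j>N$, $-\epsilon<P(\langle x_i\rangle^{n-1},x_j)-r<\epsilon$; (c) for every $\epsilon>0$ there is $N\in\mathbb{N}$ such that for all $i\ge j>N$, $-\epsilon<P(\langle x_i\rangle^{n-1},x_j)-r<\epsilon$; (d) for every $\epsilon>0$ there is $N\in\mathbb{N}$ such that for all $i\ge j>N$, $-\epsilon<P(\langle x_j\rangle^{n-1},x_i)-r<\epsilon$.
   Context: Notation: $\langle a\rangle^k$ denotes the $k$-tuple $(a,\dots,a)$ inserted into an argument list. A partial $n$-Metric on $X$ is a function $P:X^n\to\mathbb{R}$ such that for all $x_1,\dots,x_n,a\in X$: (1) $P(\langle x_1\rangle^n)\le P(\langle x_1\rangle^{n-1},x_2)$; (2) $P$ is invariant under permutations of its $n$ arguments; (3) $P(\langle x_1\rangle^{n-1},x_2)=P(\langle x_1\rangle^n)$ and $P(\langle x_2\rangle^{n-1},x_1)=P(\langle x_2\rangle^n)$ iff $x_1=x_2$; (4) $P(x_1,\dots,x_n)\le P(x_1,\dots,x_{n-1},a)+P(\langle a\rangle^{n-1},x_n)-P(\langle a\rangle^n)$. A sequence $\{x_i\}$ is Cauchy with central distance $r\in\mathbb{R}$ if for every $\epsilon>0$ there is $N$ such that for all $i_1,\dots,i_n>N$,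 $-\epsilon<P(x_{i_1},\dots,x_{i_n})-r<\epsilon$. *)

(* Defs.v *)
From mathcomp Require Import all_boot all_order all_algebra fingroup perm.
From mathcomp Require Import reals.
Set Implicit Arguments. Unset Strict Implicit. Unset Printing Implicit Defensive.
Import Order.TTheory GRing.Theory Num.Theory.
Local Open Scope ring_scope.

(* An n-tuple of points of X is a function 'I_n -> X (argument positions
   0..n-1; position n.-1 is the last one). *)

Definition cst_tuple (n : nat) (X : Type) (a : X) : 'I_n -> X := fun _ => a.
Arguments cst_tuple n {X} a.

Definition last_tuple (n : nat) (X : Type) (a b : X) : 'I_n -> X :=
  fun i => if (i : nat) == n.-1 then b else a.
Arguments last_tuple n {X} a b.

Definition repl_last (n : nat) (X : Type) (x : 'I_n -> X) (a : X) : 'I_n -> X :=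
  fun i => if (i : nat) == n.-1 then a else x i.

Definition partial_nMetric (R : realType) (n : nat) (X : Type)
    (P : ('I_n -> X) -> R) : Prop :=
  (forall x1 x2 : X, P (cst_tuple n x1) <= P (last_tuple n x1 x2)) /\
  (forall (s : 'S_n) (x : 'I_n -> X), P (fun i => x (s i)) = P x) /\
  (forall x1 x2 : X,
      (P (last_tuple n x1 x2) = P (cst_tuple n x1) /\
       P (last_tuple n x2 x1) = P (cst_tuple n x2)) <-> x1 = x2) /\
  (* (4): x = (x_1,...,x_(n-1),x_n) written as repl_last y x_n *)
  (forall (y : 'I_n -> X) (xn a : X),
      P (repl_last y xn) <= P (repl_last y a) + P (last_tuple n a xn)
                            - P (cst_tuple n a)).

Definition cauchy_central (R : realType) (n : nat) (X : Type)
    (P : ('I_n -> X) -> R) (x : nat -> X) (r : R) : Prop :=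
  forall eps : R, 0 < eps -> exists N : nat,
    forall idx : 'I_n -> nat, (forall k, (N < idx k)%N) ->
      - eps < P (fun k => x (idx k)) - r < eps.

(* Main.v *)
Require Import Defs.
From mathcomp Require Import all_boot all_order all_algebra fingroup perm.
From mathcomp Require Import reals lra.
From Stdlib Require Import FunctionalExtensionality.
Import Order.TTheory GRing.Theory Num.Theory.
Local Open Scope ring_scope.

Section S.
Variables (R : realType) (n : nat) (X : Type) (P : ('I_n -> X) -> R).
Hypothesis H2 : forall (s : 'S_n) (x : 'I_n -> X), P (fun i => x (s i)) = P x.
Hypothesis H4 : forall (y : 'I_n -> X) (xn a : X),
  P (repl_last y xn) <= P (repl_last y a) + P (last_tuple n a xn) - P (cst_tuple n a).

Definition upd (w : 'I_n -> X) (k : 'I_n) (v : X) : 'I_n -> X :=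
  fun i => if i == k then v else w i.

Lemma upd_le w k b c :
  P (upd w k b) <= P (upd w k c) + P (last_tuple n c b) - P (cst_tuple n c).
Proof.
have hn : (n.-1 < n)%N by rewrite ltn_predL (leq_ltn_trans (leq0n k) (ltn_ord k)).
pose l := Ordinal hn.
pose s := tperm k l.
have E v : P (upd w k v) = P (repl_last (fun i => w (s i)) v).
  rewrite -(H2 s (upd w k v)); congr P; apply: functional_extensionality => i.
  rewrite /upd /repl_last.
  have -> : (s i == k) = ((i : nat) == n.-1).
    by rewrite -[X in s i == X](tpermR k l) (inj_eq perm_inj).
  by [].
by rewrite !E; apply: H4.
Qed.

Lemma chain (y w : 'I_n -> X) (d : R) :
  (forall k, P (last_tuple n (w k) (y k)) - P (cst_tuple n (w k)) <= d) ->
  P y <= P w + n%:R * d.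
Proof.
move=> hd.
pose z m := fun k : 'I_n => if (k < m)%N then w k else y k.
have z0 : z 0%N = y by apply: functional_extensionality.
have zn : z n = w by apply: functional_extensionality => k; rewrite /z ltn_ord.
suff: forall m, (m <= n)%N -> P y <= P (z m) + m%:R * d.
  by move/(_ n (leqnn n)); rewrite zn.
elim=> [|m IH] hm; first by rewrite z0 mul0r addr0.
have hmn : (m < n)%N := hm.
pose km := Ordinal hmn.
have e1 : z m = upd (z m) km (y km).
  apply: functional_extensionality => i; rewrite /upd /z.
  case: (i =P km) => [->|] //=; by rewrite ltnn.
have e2 : z m.+1 = upd (z m) km (w km).
  apply: functional_extensionality => i; rewrite /upd /z ltnS leq_eqVlt.
  case: (i =P km) => [->|ne] /=; first by rewrite eqxx.
  have -> : ((i : nat) == m) = false.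
    apply/negbTE/eqP => h; apply: ne; exact: val_inj.
  by [].
have := IH (ltnW hm). have := upd_le (z m) km (y km) (w km). rewrite -e1 -e2.
have := hd km. rewrite -natr1 mulrDl mul1r. lra.
Qed.
End S.

Lemma cst_last (n : nat) (X : Type) (a : X) : last_tuple n a a = cst_tuple n a.
Proof. by apply: functional_extensionality => i; rewrite /last_tuple; case: ifP. Qed.

Theorem theorem4p11 (R : realType) (n : nat) (X : Type)
    (P : ('I_n -> X) -> R) (x : nat -> X) (r : R) :
  (2 <= n)%N -> partial_nMetric P ->
  [<-> cauchy_central P x r;
       (forall eps : R, 0 < eps -> exists N : nat, forall i j : nat,
          (N < i)%N -> (N < j)%N ->
          - eps < P (last_tuple n (x i) (x j)) - r < eps);
       (forall eps : R, 0 < eps -> exists N : nat, forall i j : nat,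
          (j <= i)%N -> (N < j)%N ->
          - eps < P (last_tuple n (x i) (x j)) - r < eps);
       (forall eps : R, 0 < eps -> exists N : nat, forall i j : nat,
          (j <= i)%N -> (N < j)%N ->
          - eps < P (last_tuple n (x j) (x i)) - r < eps)].
Proof.
move=> hn [H1 [H2 [H3 H4]]].
pose Q p q := P (last_tuple n (x p) (x q)).
have cstQ p : P (cst_tuple n (x p)) = Q p p by rewrite /Q cst_last.
pose k : R := (2 * n + 1)%:R.
have k1 : 1 <= k by rewrite /k ler1n addn1.
have nn : 0 <= (n%:R : R) by [].
have kE : k = 2 * n%:R + 1 by rewrite /k natrD natrM.
have div e : 0 < e -> (e / k) * k = e.
  move=> _; rewrite divfK //; apply/eqP => h; move: k1; rewrite h; lra.
have divp e : 0 < e -> 0 < e / k.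
  move=> he; apply: divr_gt0 => //; lra.
have L : forall e N, 0 < e ->
    (forall i j, (N < i)%N -> (N < j)%N ->
        (-e < Q i j - r < e) \/ (-e < Q j i - r < e)) ->
    forall i j, (N < i)%N -> (N < j)%N -> -(e * k) < Q i j - r < e * k.
  move=> e N e0 hG i j hi hj.
  have /andP[hi1 hi2] : -e < Q i i - r < e by case: (hG i i hi hi).
  have /andP[hj1 hj2] : -e < Q j j - r < e by case: (hG j j hj hj).
  have low : Q i i <= Q i j by rewrite /Q cst_last; apply: H1.
  have ne : 0 <= n%:R * e by apply: mulr_ge0 => //; lra.
  have up : Q i j - r < e * k.
    rewrite kE.
    case: (hG i j hi hj) => [/andP[_ h]|/andP[h1 h2]]; first lra.
    suff : Q i j <= Q j j + n%:R * (2 * e) by lra.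
    rewrite -cstQ /Q; apply: (@chain _ _ _ _ H2 H4 _ (cst_tuple n (x j))) => k0 /=.
    rewrite /last_tuple /cst_tuple; case: ifP => _.
      rewrite -/(cst_tuple n (x j)) -cst_last; lra.
    rewrite -/(last_tuple n (x j) (x i)) -/(cst_tuple n (x j)) cstQ -/(Q j i); lra.
  rewrite kE; apply/andP; split; lra.
have hAB : cauchy_central P x r -> forall eps : R, 0 < eps -> exists N : nat, forall i j : nat,
          (N < i)%N -> (N < j)%N -> - eps < Q i j - r < eps.
  move=> hA eps he; have [N hN] := hA eps he; exists N => i j hi hj.
  pose idx := fun k0 : 'I_n => if (k0 : nat) == n.-1 then j else i.
  have -> : Q i j = P (fun k0 => x (idx k0)).
    rewrite /Q; congr P.
    apply: functional_extensionality => k0; rewrite /last_tuple /idx; by case: ifP.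
  apply: hN => k0; rewrite /idx; by case: ifP.
pose Bp := forall eps : R, 0 < eps -> exists N : nat, forall i j : nat,
          (N < i)%N -> (N < j)%N -> - eps < Q i j - r < eps.
have hBA : Bp -> cauchy_central P x r.
  move=> hB eps he; have [N hN] := hB (eps/k) (divp _ he); exists N => idx hidx.
  have ek : eps = (eps / k) * k by rewrite div.
  move: (eps / k) (divp _ he) ek hN => e e0 ek hN.
  pose m := N.+1; have hm : (N < m)%N by [].
  have /andP[m1 m2] := hN m m hm hm.
  have up : P (fun k0 => x (idx k0)) <= Q m m + n%:R * (2*e).
    rewrite -cstQ; apply: (@chain _ _ _ _ H2 H4 _ (cst_tuple n (x m))) => k0.
    change (Q m (idx k0) - P (cst_tuple n (x m)) <= 2*e).
    rewrite cstQ; have /andP[a1 a2] := hN m (idx k0) hm (hidx k0); lra.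
  have lo : P (cst_tuple n (x m)) <= P (fun k0 => x (idx k0)) + n%:R*(2*e).
    apply: (@chain _ _ _ _ H2 H4 (cst_tuple n (x m)) (fun k0 => x (idx k0))) => k0.
    change (Q (idx k0) m - P (cst_tuple n (x (idx k0))) <= 2*e).
    rewrite cstQ; have /andP[a1 a2] := hN (idx k0) m (hidx k0) hm.
    have /andP[b1 b2] := hN (idx k0) (idx k0) (hidx k0) (hidx k0); lra.
  rewrite cstQ in lo.
  have ne : 0 <= n%:R * e by apply: mulr_ge0 => //; lra.
  rewrite ek kE; apply/andP; split; lra.
have hCB : (forall eps : R, 0 < eps -> exists N : nat, forall i j : nat,
          (j <= i)%N -> (N < j)%N -> - eps < Q i j - r < eps) -> Bp.
  move=> hC eps he; have [N hN] := hC (eps/k) (divp _ he); exists N => i j hi hj.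
  rewrite -(div eps he); apply: (L _ N (divp _ he)) => // i' j' hi' hj'.
  case: (leqP j' i') => h; [left; exact: hN | right; apply: hN => //; exact: ltnW].
have hDB : (forall eps : R, 0 < eps -> exists N : nat, forall i j : nat,
          (j <= i)%N -> (N < j)%N -> - eps < Q j i - r < eps) -> Bp.
  move=> hC eps he; have [N hN] := hC (eps/k) (divp _ he); exists N => i j hi hj.
  rewrite -(div eps he); apply: (L _ N (divp _ he)) => // i' j' hi' hj'.
  case: (leqP j' i') => h; [right; exact: hN | left; apply: hN => //; exact: ltnW].
tfae.
- exact: hAB.
- move=> hB eps he; have [N hN] := hB eps he; exists N => i j hji hj.
  apply: hN => //; exact: leq_trans hj hji.
- move=> hC; have hB := hCB hC.
  move=> eps he; have [N hN] := hB eps he; exists N => i j hji hj.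
  apply: hN => //; exact: leq_trans hj hji.
- by move=> hD; apply: hBA; apply: hDB.
Qed.
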